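(* Assume $\phi(x)>0$ for all $x>0$ and $\phi$ is non-increasing. Let $i<j$ and let $d_{i+1},\dots,d_j\ge0$ be a fixed sequence of doses. Define two trajectories by $Y_{k+1}^+=F(Y_k^+)-\mathrm{BED}_T(d_{k+1})$ and $\widetilde Y_{k+1}^+=F(\widetilde Y_k^+)-\mathrm{BED}_T(d_{k+1})$ for $k=i,\dots,j-1$, starting from given values $Y_i^+$ and $\widetilde Y_i^+$. If $Y_i^+<\widetilde Y_i^+$, then $Y_j^+<\widetilde Y_j^+$ and $\widetilde Y_j^+-Y_j^+\le \widetilde Y_i^+-Y_i^+$.
   Context: Tumor parameter $\alpha_T>0$, $\beta_T>0$, $[\alpha/\beta]_T=\alpha_T/\beta_T$, and $\mathrm{BED}_T(d)=d\left(1+\frac{d}{[\alpha/\beta]_T}\right)$. Tumor growth follows $\frac{1}{x}\frac{dx}{dt}=\phi(x)$ with $\phi:(0,\infty)\to\mathbb{R}$ continuous and non-increasing. With $Y=\ln(\text{number of tumor cells})/\alpha_T$, $F$ denotes the map sending the value of $Y$ at time $t$ to its value at time $t+1$ under this ODE (one day of growth without radiation). *)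

(* Defs.v *)
From Stdlib Require Import Reals Lra.
From Coquelicot Require Import Coquelicot.
Open Scope R_scope.

Definition BED_T (alphaT betaT d : R) : R := d * (1 + d / (alphaT / betaT)).

(* F is the one-day growth map in the variable Y = ln(x)/alphaT, where the
   number of tumor cells x follows (1/x) dx/dt = phi(x): for every starting
   value y of Y, F y is the value of Y one time unit later, i.e. there is a
   (positive) solution x of x' = x phi(x) on [0,1] with x(0) = exp(alphaT y)
   and F y = ln(x(1)) / alphaT. *)
Definition is_growth_map (alphaT : R) (phi : R -> R) (F : R -> R) : Prop :=
  forall y : R, exists x : R -> R,
    x 0 = exp (alphaT * y) /\
    (forall t, 0 <= t <= 1 -> 0 < x t /\ is_derive x t (x t * phi (x t))) /\
    F y = ln (x 1) / alphaT.

(* Main.v *)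
Require Import Defs.
From Stdlib Require Import Reals.
From Coquelicot Require Import Coquelicot.
Open Scope R_scope.
From Stdlib Require Import Lra Lia.

Section S.
Variable phi : R -> R.
Hypothesis phi_cont : forall x, 0 < x -> continuous phi x.
Hypothesis phi_pos : forall x, 0 < x -> 0 < phi x.

Definition h (x : R) := / (x * phi x).
Definition G (x : R) := RInt h 1 x.

Lemma h_cont z : 0 < z -> continuous h z.
Proof.
  intros Hz. unfold h. apply continuous_Rinv_comp.
  - apply (continuous_mult (fun y => y) phi). apply continuous_id. now apply phi_cont.
  - specialize (phi_pos z Hz). nra.
Qed.

Lemma h_pos z : 0 < z -> 0 < h z.
Proof. intros Hz. unfold h. specialize (phi_pos z Hz). apply Rinv_0_lt_compat. nra. Qed.

Lemma G_deriv b : 0 < b -> is_derive G b (h b).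
Proof.
  intros Hb. apply (is_derive_RInt h G 1 b).
  - exists (mkposreal (b/2) ltac:(lra)). intros y Hy.
    apply (RInt_correct h 1 y). apply ex_RInt_continuous. intros z Hz. apply h_cont.
    cbn in Hy. unfold ball in Hy; cbn in Hy; unfold AbsRing_ball, abs, minus, plus, opp in Hy; cbn in Hy.
    apply Rabs_def2 in Hy. 
    assert (0 < Rmin 1 y) by (apply Rmin_glb_lt; lra). lra.
  - now apply h_cont.
Qed.

Lemma cont_of_deriv f df x : is_derive f x df -> continuity_pt f x.
Proof.
  intros H. apply continuity_pt_filterlim. exact (ex_derive_continuous f x (ex_intro _ df H)).
Qed.

Lemma G_incr a b : 0 < a -> a < b -> G a < G b.
Proof.
  intros Ha Hab.
  destruct (MVT_gen G a b h) as [c [Hc Heq]].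
  - intros x Hx. apply G_deriv. rewrite Rmin_left in Hx by lra. lra.
  - intros x Hx. apply cont_of_deriv with (h x). apply G_deriv. rewrite Rmin_left in Hx by lra. lra.
  - rewrite Rmin_left, Rmax_right in Hc by lra.
    assert (0 < h c) by (apply h_pos; lra). nra.
Qed.

Lemma deriv_const f df : (forall t, 0 <= t <= 1 -> is_derive f t (df t)) ->
  (forall t, 0 <= t <= 1 -> df t = 0) -> forall t, 0 <= t <= 1 -> f t = f 0.
Proof.
  intros Hd H0 t Ht. destruct (Req_dec t 0) as [->|Hn]; [reflexivity|].
  destruct (MVT_gen f 0 t df) as [c [Hc Heq]].
  - intros x Hx. rewrite Rmin_left, Rmax_right in Hx by lra. apply Hd. lra.
  - intros x Hx. rewrite Rmin_left, Rmax_right in Hx by lra. apply cont_of_deriv with (df x). apply Hd. lra.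
  - rewrite Rmin_left, Rmax_right in Hc by lra. rewrite H0 in Heq by lra. lra.
Qed.

Lemma deriv_noninc f df : (forall t, 0 <= t <= 1 -> is_derive f t (df t)) ->
  (forall t, 0 <= t <= 1 -> df t <= 0) -> f 1 <= f 0.
Proof.
  intros Hd H0.
  destruct (MVT_gen f 0 1 df) as [c [Hc Heq]].
  - intros x Hx. rewrite Rmin_left, Rmax_right in Hx by lra. apply Hd. lra.
  - intros x Hx. rewrite Rmin_left, Rmax_right in Hx by lra. apply cont_of_deriv with (df x). apply Hd. lra.
  - rewrite Rmin_left, Rmax_right in Hc by lra. specialize (H0 c Hc). nra.
Qed.

Hypothesis phi_noninc : forall x y, 0 < x -> x <= y -> phi y <= phi x.

Lemma compare (x1 x2 : R -> R) :
  (forall t, 0 <= t <= 1 -> 0 < x1 t /\ is_derive x1 t (x1 t * phi (x1 t))) ->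
  (forall t, 0 <= t <= 1 -> 0 < x2 t /\ is_derive x2 t (x2 t * phi (x2 t))) ->
  x1 0 < x2 0 ->
  x1 1 < x2 1 /\ ln (x2 1) - ln (x1 1) <= ln (x2 0) - ln (x1 0).
Proof.
  intros H1 H2 H0.
  assert (DG : forall x : R -> R, (forall t, 0 <= t <= 1 -> 0 < x t /\ is_derive x t (x t * phi (x t))) ->
     forall t, 0 <= t <= 1 -> is_derive (fun t => G (x t)) t 1).
  { intros x Hx t Ht. destruct (Hx t Ht) as [Hp Hd].
    eapply is_derive_ext. intros; reflexivity.
    replace 1 with (scal (x t * phi (x t)) (h (x t))).
    apply (is_derive_comp G x t). now apply G_deriv. exact Hd.
    unfold scal; cbn; unfold mult; cbn. unfold h. specialize (phi_pos _ Hp).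
    field. lra. }
  assert (Kc : forall t, 0 <= t <= 1 -> G (x2 t) - G (x1 t) = G (x2 0) - G (x1 0)).
  { apply (deriv_const (fun t => G (x2 t) - G (x1 t)) (fun _ => 0)).
    - intros t Ht. replace 0 with (1 - 1) by ring. apply (is_derive_minus (fun t => G (x2 t)) (fun t => G (x1 t))).
      now apply DG. now apply DG.
    - reflexivity. }
  assert (K0 : G (x1 0) < G (x2 0)).
  { apply G_incr; auto. apply H1; lra. }
  assert (Lt : forall t, 0 <= t <= 1 -> x1 t < x2 t).
  { intros t Ht. destruct (Rlt_or_le (x1 t) (x2 t)) as [|Hle]; auto.
    exfalso. specialize (Kc t Ht). destruct (H1 t Ht) as [P1 _]. destruct (H2 t Ht) as [P2 _].
    destruct Hle as [Hlt| Heq].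
    - pose proof (G_incr (x2 t) (x1 t) P2 Hlt). lra.
    - rewrite Heq in Kc. lra. }
  split. apply Lt; lra.
  assert (Dl : forall x : R -> R, (forall t, 0 <= t <= 1 -> 0 < x t /\ is_derive x t (x t * phi (x t))) ->
     forall t, 0 <= t <= 1 -> is_derive (fun t => ln (x t)) t (phi (x t))).
  { intros x Hx t Ht. destruct (Hx t Ht) as [Hp Hd].
    replace (phi (x t)) with (scal (x t * phi (x t)) (/ x t)).
    apply (is_derive_comp ln x t). now apply is_derive_ln. exact Hd.
    unfold scal; cbn; unfold mult; cbn. field. lra. }
  pose proof (deriv_noninc (fun t => ln (x2 t) - ln (x1 t)) (fun t => phi (x2 t) - phi (x1 t))) as HH.
  cbn in HH. apply HH.
  - intros t Ht. apply (is_derive_minus (fun t => ln (x2 t)) (fun t => ln (x1 t))).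
    now apply Dl. now apply Dl.
  - intros t Ht. pose proof (Lt t Ht). destruct (H1 t Ht).
    pose proof (phi_noninc (x1 t) (x2 t)). lra.
Qed.
End S.

Lemma Fstep alphaT phi F (halpha : 0 < alphaT)
  (phi_cont : forall x, 0 < x -> continuous phi x)
  (phi_pos : forall x, 0 < x -> 0 < phi x)
  (phi_noninc : forall x y, 0 < x -> x <= y -> phi y <= phi x)
  (hF : is_growth_map alphaT phi F) y1 y2 :
  y1 < y2 -> F y1 < F y2 /\ F y2 - F y1 <= y2 - y1.
Proof.
  intros Hy. destruct (hF y1) as [x1 [E1 [D1 F1]]]. destruct (hF y2) as [x2 [E2 [D2 F2]]].
  destruct (compare phi phi_cont phi_pos phi_noninc x1 x2 D1 D2) as [L M].
  { rewrite E1, E2. apply exp_increasing. nra. }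
  rewrite E1, E2, !ln_exp in M.
  assert (P1 : 0 < x1 1) by (apply D1; lra).
  pose proof (ln_increasing _ _ P1 L).
  rewrite F1, F2. unfold Rdiv. split.
  - apply Rmult_lt_compat_r. now apply Rinv_0_lt_compat. exact H.
  - replace (y2 - y1) with ((alphaT * y2 - alphaT * y1) * / alphaT) by (field; lra).
    rewrite <- Rmult_minus_distr_r. apply Rmult_le_compat_r.
    left; now apply Rinv_0_lt_compat. exact M.
Qed.

Theorem lemma2
  (alphaT betaT : R) (phi F : R -> R)
  (halpha : 0 < alphaT) (hbeta : 0 < betaT)
  (phi_cont : forall x, 0 < x -> continuous phi x)
  (phi_pos : forall x, 0 < x -> 0 < phi x)
  (phi_noninc : forall x y, 0 < x -> x <= y -> phi y <= phi x)
  (hF : is_growth_map alphaT phi F)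
  (i j : nat) (hij : (i < j)%nat)
  (d : nat -> R) (hd : forall k, (i < k <= j)%nat -> 0 <= d k)
  (Y Yt : nat -> R)
  (hY : forall k, (i <= k < j)%nat -> Y (S k) = F (Y k) - BED_T alphaT betaT (d (S k)))
  (hYt : forall k, (i <= k < j)%nat -> Yt (S k) = F (Yt k) - BED_T alphaT betaT (d (S k)))
  (hi : Y i < Yt i) :
  Y j < Yt j /\ Yt j - Y j <= Yt i - Y i.
Proof.
  assert (forall n, (i <= n <= j)%nat -> Y n < Yt n /\ Yt n - Y n <= Yt i - Y i).
  { induction n as [|n IH]; intros Hn.
    - assert (i = 0%nat) by lia. subst. lra.
    - destruct (Nat.eq_dec (S n) i) as [E|E].
      + rewrite E. lra.
      + destruct IH as [A B]. lia.
        rewrite (hY n), (hYt n) by lia.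
        destruct (Fstep alphaT phi F halpha phi_cont phi_pos phi_noninc hF (Y n) (Yt n) A).
        lra. }
  apply H. lia.
Qed.
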